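(* Let $\mathcal D\subset\mathbb R^d$ be a nonempty compact convex set with Euclidean diameter $M$, and let $f$ be convex and differentiable on an open set containing $\mathcal D$ with $\nabla f$ being $L$-Lipschitz on $\mathcal D$ (Euclidean norm). For $x\in\mathcal D$ let $h(x):=f(x)-\min_{\mathcal D}f$ and $g^{FW}(x):=\max_{s\in\mathcal D}\langle-\nabla f(x),s-x\rangle$. Then for every $x\in\mathcal D$: if $h(x)>LM^2/2$ then $g^{FW}(x)\le h(x)+LM^2/2$, and otherwise $g^{FW}(x)\le M\sqrt{2h(x)L}$. *)

(* Defs.v *)
From Stdlib Require Vectors.Fin.
From Stdlib Require Import Reals List.
Open Scope R_scope.

Definition vec (d : nat) := Fin.t d -> R.

Fixpoint fsum (d : nat) : (Fin.t d -> R) -> R :=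
  match d with
  | O => fun _ => 0
  | S n => fun F => F Fin.F1 + fsum n (fun i => F (Fin.FS i))
  end.

Definition vadd {d} (x y : vec d) : vec d := fun i => x i + y i.
Definition vsub {d} (x y : vec d) : vec d := fun i => x i - y i.
Definition vscale {d} (a : R) (x : vec d) : vec d := fun i => a * x i.
Definition vopp {d} (x : vec d) : vec d := fun i => - x i.

Definition dot {d} (x y : vec d) : R := fsum d (fun i => x i * y i).
Definition norm {d} (x : vec d) : R := sqrt (dot x x).

Definition is_open {d} (U : vec d -> Prop) : Prop :=
  forall x, U x -> exists eps, 0 < eps /\
    forall y, norm (vsub y x) < eps -> U y.

Definition is_compact {d} (D : vec d -> Prop) : Prop :=
  forall (I : Type) (V : I -> vec d -> Prop),
    (forall i, is_open (V i)) ->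
    (forall x, D x -> exists i, V i x) ->
    exists l : list I, forall x, D x -> exists i, List.In i l /\ V i x.

Definition is_convex {d} (D : vec d -> Prop) : Prop :=
  forall x y t, D x -> D y -> 0 <= t <= 1 ->
    D (vadd (vscale (1 - t) x) (vscale t y)).

Definition convex_on {d} (U : vec d -> Prop) (f : vec d -> R) : Prop :=
  forall x y t, U x -> U y -> 0 <= t <= 1 ->
    f (vadd (vscale (1 - t) x) (vscale t y)) <= (1 - t) * f x + t * f y.

Definition has_gradient_on {d} (U : vec d -> Prop) (f : vec d -> R)
    (gf : vec d -> vec d) : Prop :=
  forall x, U x -> forall eps, 0 < eps -> exists delta, 0 < delta /\
    forall h, 0 < norm h < delta ->
      Rabs (f (vadd x h) - f x - dot (gf x) h) <= eps * norm h.

Definition is_diameter {d} (D : vec d -> Prop) (M : R) : Prop :=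
  is_lub (fun r => exists x y, D x /\ D y /\ r = norm (vsub x y)) M.

Definition lipschitz_on {d} (D : vec d -> Prop) (g : vec d -> vec d) (L : R) : Prop :=
  forall x y, D x -> D y -> norm (vsub (g x) (g y)) <= L * norm (vsub x y).

Definition is_min_on {d} (D : vec d -> Prop) (f : vec d -> R) (m : R) : Prop :=
  (exists x0, D x0 /\ f x0 = m) /\ (forall y, D y -> m <= f y).

(* G = g^FW(x) = max_{s in D} <-grad f(x), s - x>  (as supremum; attained by compactness) *)
Definition is_fw_gap {d} (D : vec d -> Prop) (gf : vec d -> vec d) (x : vec d) (G : R) : Prop :=
  is_lub (fun r => exists s, D s /\ r = dot (vopp (gf x)) (vsub s x)) G.

(* Main.v *)
Require Import Defs.
From Stdlib Require Import Reals Lra Psatz FunctionalExtensionality Classical.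
Open Scope R_scope.

Lemma fsum_ext d (F G : Fin.t d -> R) : (forall i, F i = G i) -> fsum d F = fsum d G.
Proof. revert F G; induction d; intros F G H; simpl; [reflexivity|].
  rewrite H, (IHd (fun i => F (Fin.FS i)) (fun i => G (Fin.FS i))); auto. Qed.

Lemma fsum_plus d (F G : Fin.t d -> R) : fsum d (fun i => F i + G i) = fsum d F + fsum d G.
Proof. revert F G; induction d; intros F G; simpl; [ring|].
  rewrite (IHd (fun i => F (Fin.FS i)) (fun i => G (Fin.FS i))); ring. Qed.

Lemma fsum_scal d (F : Fin.t d -> R) c : fsum d (fun i => c * F i) = c * fsum d F.
Proof. revert F; induction d; intros F; simpl; [ring|].
  rewrite (IHd (fun i => F (Fin.FS i))); ring. Qed.

Lemma fsum_minus d (F G : Fin.t d -> R) : fsum d (fun i => F i - G i) = fsum d F - fsum d G.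
Proof. revert F G; induction d; intros F G; simpl; [ring|].
  rewrite (IHd (fun i => F (Fin.FS i)) (fun i => G (Fin.FS i))); ring. Qed.

Lemma fsum_nonneg d (F : Fin.t d -> R) : (forall i, 0 <= F i) -> 0 <= fsum d F.
Proof. revert F; induction d; intros F H; simpl; [lra|].
  specialize (IHd (fun i => F (Fin.FS i)) (fun i => H _)). specialize (H Fin.F1). lra. Qed.

Lemma dot_sym d (a b : vec d) : dot a b = dot b a.
Proof. unfold dot; apply fsum_ext; intros; ring. Qed.

Lemma dot_nonneg d (a : vec d) : 0 <= dot a a.
Proof. unfold dot; apply fsum_nonneg; intros; nra. Qed.

Lemma dot_sub_l d (a b c : vec d) : dot (vsub a b) c = dot a c - dot b c.
Proof. unfold dot, vsub. rewrite <- fsum_minus. apply fsum_ext; intros; ring. Qed.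

Lemma dot_scale_r d (a b : vec d) t : dot a (vscale t b) = t * dot a b.
Proof. unfold dot, vscale. rewrite <- fsum_scal. apply fsum_ext; intros; ring. Qed.

Lemma dot_scale_l d (a b : vec d) t : dot (vscale t a) b = t * dot a b.
Proof. unfold dot, vscale. rewrite <- fsum_scal. apply fsum_ext; intros; ring. Qed.

Lemma dot_opp_l d (a b : vec d) : dot (vopp a) b = - dot a b.
Proof. unfold dot, vopp. replace (- fsum d (fun i => a i * b i)) with (-1 * fsum d (fun i => a i * b i)) by ring.
 rewrite <- fsum_scal. apply fsum_ext; intros; ring. Qed.

Lemma dot_quad d (a b : vec d) t :
  dot (vsub a (vscale t b)) (vsub a (vscale t b)) = dot a a - 2 * t * dot a b + t * t * dot b b.
Proof. unfold dot, vsub, vscale.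
  replace (fsum d (fun i => a i * a i) - 2 * t * fsum d (fun i => a i * b i) +
   t * t * fsum d (fun i => b i * b i)) with
   (fsum d (fun i => a i * a i) + ((-2 * t) * fsum d (fun i => a i * b i) +
   (t * t) * fsum d (fun i => b i * b i))) by ring.
  rewrite <- !fsum_scal, <- !fsum_plus. apply fsum_ext; intros; ring. Qed.

Lemma cs2 d (a b : vec d) : dot a b * dot a b <= dot a a * dot b b.
Proof.
  assert (Q : forall t, 0 <= dot a a - 2 * t * dot a b + t * t * dot b b).
  { intro t. rewrite <- dot_quad. apply dot_nonneg. }
  pose proof (dot_nonneg _ a). pose proof (dot_nonneg _ b).
  destruct (Req_dec (dot b b) 0) as [Hb|Hb].
  - destruct (Req_dec (dot a b) 0) as [Hab|Hab].
    + rewrite Hab, Hb; lra.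
    + specialize (Q ((dot a a + 1) / (2 * dot a b))). rewrite Hb in Q.
      replace (2 * ((dot a a + 1) / (2 * dot a b)) * dot a b) with (dot a a + 1) in Q by (field; auto).
      lra.
  - specialize (Q (dot a b / dot b b)).
    assert (0 < dot b b) by lra.
    replace (dot a a - 2 * (dot a b / dot b b) * dot a b +
      dot a b / dot b b * (dot a b / dot b b) * dot b b) with
      ((dot a a * dot b b - dot a b * dot a b) / dot b b) in Q by (field; lra).
    apply Rmult_le_compat_r with (r := dot b b) in Q; [|lra].
    unfold Rdiv in Q. rewrite Rmult_assoc, Rinv_l in Q by lra. lra.
Qed.

Lemma norm_nonneg d (a : vec d) : 0 <= norm a.
Proof. apply sqrt_pos. Qed.

Lemma norm_sq d (a : vec d) : norm a * norm a = dot a a.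
Proof. apply sqrt_sqrt, dot_nonneg. Qed.

Lemma cs_abs d (a b : vec d) : Rabs (dot a b) <= norm a * norm b.
Proof.
  unfold norm. rewrite <- sqrt_mult by apply dot_nonneg.
  rewrite <- sqrt_Rsqr_abs. apply sqrt_le_1_alt. unfold Rsqr. apply cs2.
Qed.

Lemma cs d (a b : vec d) : dot a b <= norm a * norm b.
Proof. pose proof (cs_abs _ a b). pose proof (Rle_abs (dot a b)). lra. Qed.

Lemma norm_scale d (a : vec d) t : norm (vscale t a) = Rabs t * norm a.
Proof. unfold norm. rewrite dot_scale_l, dot_scale_r, <- Rmult_assoc.
  rewrite sqrt_mult; [|nra|apply dot_nonneg]. f_equal.
  rewrite <- sqrt_Rsqr_abs. reflexivity. Qed.

Lemma seg_add d (x v : vec d) t h :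
  vadd x (vscale (t + h) v) = vadd (vadd x (vscale t v)) (vscale h v).
Proof. apply functional_extensionality; intro i; unfold vadd, vscale; ring. Qed.

Lemma deriv_phi d (U : vec d -> Prop) f gf (hfd : has_gradient_on U f gf) x v t :
  U (vadd x (vscale t v)) -> 0 < norm v ->
  derivable_pt_lim (fun t => f (vadd x (vscale t v))) t (dot (gf (vadd x (vscale t v))) v).
Proof.
  intros HU Hv eps Heps.
  destruct (hfd _ HU (eps / (2 * norm v))) as [delta [Hd H]].
  { apply Rdiv_lt_0_compat; lra. }
  assert (Hdp : 0 < delta / norm v) by (apply Rdiv_lt_0_compat; lra).
  exists (mkposreal _ Hdp). simpl. intros h Hh0 Hhd.
  assert (Hn : norm (vscale h v) = Rabs h * norm v) by apply norm_scale.
  assert (Hah : 0 < Rabs h) by (apply Rabs_pos_lt; auto).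
  specialize (H (vscale h v)).
  rewrite Hn, <- seg_add, dot_scale_r in H.
  assert (Hlt : Rabs h * norm v < delta).
  { apply Rmult_lt_compat_r with (r := norm v) in Hhd; [|lra].
    unfold Rdiv in Hhd. rewrite Rmult_assoc, Rinv_l in Hhd; lra. }
  specialize (H (conj (Rmult_lt_0_compat _ _ Hah Hv) Hlt)).
  set (A := f (vadd x (vscale (t + h) v))) in *.
  set (B := f (vadd x (vscale t v))) in *.
  set (G := dot (gf (vadd x (vscale t v))) v) in *.
  replace ((A - B) / h - G) with ((A - B - h * G) * / h) by (field; auto).
  rewrite Rabs_mult, Rabs_inv.
  replace (eps / (2 * norm v) * (Rabs h * norm v)) with (eps / 2 * Rabs h) in H by (field; lra).
  apply Rmult_lt_reg_r with (r := Rabs h); [lra|].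
  rewrite Rmult_assoc, Rinv_l by lra. nra.
Qed.

Lemma deriv_poly a K t :
  derivable_pt_lim (fun t => t * a + K * (t * t)) t (a + K * (2 * t)).
Proof.
  intros eps Heps.
  assert (Hp : 0 < eps / (Rabs K + 1)) by (apply Rdiv_lt_0_compat; [lra|pose proof (Rabs_pos K); lra]).
  exists (mkposreal _ Hp). simpl. intros h Hh0 Hhd.
  replace (((t + h) * a + K * ((t + h) * (t + h)) - (t * a + K * (t * t))) / h - (a + K * (2 * t)))
    with (K * h) by (field; auto).
  rewrite Rabs_mult. pose proof (Rabs_pos K). pose proof (Rabs_pos h).
  apply Rmult_lt_compat_r with (r := Rabs K + 1) in Hhd; [|lra].
  unfold Rdiv in Hhd. rewrite Rmult_assoc, Rinv_l in Hhd by lra. nra.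
Qed.

Lemma descent d (D U : vec d -> Prop) f gf L
  (hDcv : is_convex D) (hDU : forall x, D x -> U x)
  (hfd : has_gradient_on U f gf) (hL : lipschitz_on D gf L) x s gam :
  D x -> D s -> 0 < norm (vsub s x) -> 0 < gam <= 1 ->
  f (vadd x (vscale gam (vsub s x))) <=
   f x + gam * dot (gf x) (vsub s x) + L * dot (vsub s x) (vsub s x) / 2 * (gam * gam).
Proof.
  intros Hx Hs Hv Hg. set (v := vsub s x) in *.
  set (a := dot (gf x) v). set (K := L * dot v v / 2).
  assert (Hseg : forall t, 0 <= t <= 1 -> D (vadd x (vscale t v))).
  { intros t Ht. specialize (hDcv x s t Hx Hs Ht).
    replace (vadd x (vscale t v)) with (vadd (vscale (1 - t) x) (vscale t s)); auto.
    apply functional_extensionality; intro i; unfold v, vadd, vscale, vsub; ring. }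
  destruct (MVT_cor2 (fun t => f (vadd x (vscale t v)) - (t * a + K * (t * t)))
     (fun t => dot (gf (vadd x (vscale t v))) v - (a + K * (2 * t))) 0 gam) as [c [Hc Hc2]].
  { lra. }
  { intros c Hc. apply derivable_pt_lim_minus.
    - apply (deriv_phi d U f gf hfd); auto. apply hDU, Hseg; lra.
    - apply deriv_poly. }
  assert (H0 : vadd x (vscale 0 v) = x).
  { apply functional_extensionality; intro i; unfold vadd, vscale; ring. }
  rewrite H0 in Hc.
  assert (Hder : dot (gf (vadd x (vscale c v))) v - (a + K * (2 * c)) <= 0).
  { assert (E : dot (gf (vadd x (vscale c v))) v - a =
       dot (vsub (gf (vadd x (vscale c v))) (gf x)) v) by (unfold a; rewrite dot_sub_l; ring).
    pose proof (cs _ (vsub (gf (vadd x (vscale c v))) (gf x)) v) as Hcs.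
    pose proof (hL _ _ (Hseg c ltac:(lra)) Hx) as HL.
    assert (Hvs : vsub (vadd x (vscale c v)) x = vscale c v).
    { apply functional_extensionality; intro i; unfold vadd, vscale, vsub; ring. }
    rewrite Hvs, norm_scale, Rabs_right in HL by lra.
    pose proof (norm_nonneg _ v). pose proof (norm_sq _ v).
    unfold K. nra. }
  nra.
Qed.

Lemma final_alg h c g M L : 0 <= h -> 0 <= c -> 0 <= M -> c = L * M ^ 2 / 2 ->
  (forall gam, 0 <= gam <= 1 -> gam * g <= h + c * (gam * gam)) ->
  (h > c -> g <= h + c) /\ (~ h > c -> g <= M * sqrt (2 * h * L)).
Proof.
  intros Hh Hc HM Hcd Hg. split.
  - intros _. specialize (Hg 1). lra.
  - intros Hn. assert (Hhc : h <= c) by lra.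
    destruct (Req_dec h 0) as [H0|H0].
    + subst h. replace (2 * 0 * L) with 0 by ring. rewrite sqrt_0.
      apply Rnot_lt_le. intro Hgp.
      specialize (Hg (g / (2 * c + g))).
      assert (Hq : 0 < 2 * c + g) by lra.
      assert (0 <= g / (2 * c + g) <= 1).
      { split. apply Rlt_le, Rdiv_lt_0_compat; lra.
        apply Rmult_le_reg_r with (2 * c + g); auto. unfold Rdiv.
        rewrite Rmult_assoc, Rinv_l by lra. lra. }
      specialize (Hg H). set (q := g / (2 * c + g)) in *.
      assert (Hqe : q * (2 * c + g) = g) by (unfold q; field; lra).
      nra.
    + assert (Hh' : 0 < h) by lra.
      assert (HL : 0 < L * M ^ 2) by lra.
      assert (HML : 0 < M /\ 0 < L).
      { destruct (Req_dec M 0) as [E|E]. subst M. simpl in HL. lra. split. lra. nra. }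
      destruct HML as [HMp HLp].
      set (s := M * sqrt (2 * h * L)).
      assert (Hs2 : s * s = 4 * h * c).
      { unfold s. replace (M * sqrt (2 * h * L) * (M * sqrt (2 * h * L))) with
          (M * M * (sqrt (2 * h * L) * sqrt (2 * h * L))) by ring.
        rewrite sqrt_sqrt by nra. rewrite Hcd. field. }
      assert (Hsp : 0 < s) by (unfold s; apply Rmult_lt_0_compat; auto; apply sqrt_lt_R0; nra).
      set (gam := 2 * h / s).
      assert (Hgs : gam * s = 2 * h) by (unfold gam; field; lra).
      assert (Hgp : 0 < gam) by (unfold gam; apply Rdiv_lt_0_compat; lra).
      assert (Hg2 : c * (gam * gam) = h).
      { apply Rmult_eq_reg_r with (s * s); [|nra].
        replace (c * (gam * gam) * (s * s)) with (c * ((gam * s) * (gam * s))) by ring.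
        rewrite Hgs, Hs2. ring. }
      assert (Hg1 : gam <= 1) by (apply Rnot_lt_le; intro Hgt; assert (gam * gam > 1) by nra; assert (0 < c) by lra; nra).
      specialize (Hg gam (conj (Rlt_le _ _ Hgp) Hg1)). nra.
Qed.

Theorem theorem2 (d : nat) (D U : vec d -> Prop) (f : vec d -> R)
  (gf : vec d -> vec d) (M L m : R)
  (hDne : exists x0, D x0) (hDc : is_compact D) (hDcv : is_convex D)
  (hM : is_diameter D M)
  (hUo : is_open U) (hUc : is_convex U) (hDU : forall x, D x -> U x)
  (hfc : convex_on U f) (hfd : has_gradient_on U f gf)
  (hL : lipschitz_on D gf L)
  (hm : is_min_on D f m) :
  forall x G, D x -> is_fw_gap D gf x G ->
    (f x - m > L * M ^ 2 / 2 -> G <= (f x - m) + L * M ^ 2 / 2) /\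
    (~ (f x - m > L * M ^ 2 / 2) -> G <= M * sqrt (2 * (f x - m) * L)).
Proof.
  intros x G Hx HG.
  destruct hm as [_ Hmin].
  assert (Hh : 0 <= f x - m) by (specialize (Hmin x Hx); lra).
  destruct hM as [Hub Hlub].
  assert (Hnorm_le : forall a b, D a -> D b -> norm (vsub a b) <= M).
  { intros a b Ha Hb. apply Hub. exists a, b. auto. }
  assert (HM0 : 0 <= M) by (pose proof (Hnorm_le x x Hx Hx); pose proof (norm_nonneg _ (vsub x x)); lra).
  assert (HLM : 0 <= L * M ^ 2).
  { destruct (Rle_lt_dec M 0) as [E|E].
    - replace M with 0 by lra. simpl. lra.
    - destruct (classic (exists a b, D a /\ D b /\ 0 < norm (vsub a b))) as [[a [b [Ha [Hb Hp]]]]|Hno].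
      + pose proof (hL a b Ha Hb). pose proof (norm_nonneg _ (vsub (gf a) (gf b))).
        assert (0 <= L) by nra. simpl. nra.
      + exfalso. assert (M <= 0); [|lra]. apply Hlub. intros r [a [b [Ha [Hb Hr]]]].
        subst r. apply Rnot_lt_le. intro. apply Hno. exists a, b. auto. }
  set (h := f x - m) in *. set (c := L * M ^ 2 / 2).
  assert (Hkey : forall s, D s -> forall gam, 0 <= gam <= 1 ->
     gam * dot (vopp (gf x)) (vsub s x) <= h + c * (gam * gam)).
  { intros s Hs gam Hgam. rewrite dot_opp_l.
    pose proof (norm_nonneg _ (vsub s x)) as Hn0.
    destruct (Req_dec (norm (vsub s x)) 0) as [E|E].
    - pose proof (cs_abs _ (gf x) (vsub s x)) as Hc. rewrite E, Rmult_0_r in Hc.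
      pose proof (Rabs_pos (dot (gf x) (vsub s x))).
      assert (dot (gf x) (vsub s x) = 0) by (destruct (Rcase_abs (dot (gf x) (vsub s x))) as [Q|Q]; [rewrite Rabs_left in Hc by lra | rewrite Rabs_right in Hc by lra]; lra).
      rewrite H0. unfold c. nra.
    - destruct (Req_dec gam 0) as [E0|E0].
      + subst gam. unfold c; nra.
      + assert (Hp : 0 < norm (vsub s x)) by lra.
        pose proof (descent d D U f gf L hDcv hDU hfd hL x s gam Hx Hs Hp ltac:(lra)) as Hd.
        assert (HDs : D (vadd x (vscale gam (vsub s x)))).
        { specialize (hDcv x s gam Hx Hs Hgam).
          replace (vadd x (vscale gam (vsub s x))) with (vadd (vscale (1 - gam) x) (vscale gam s)); auto.
          apply functional_extensionality; intro i; unfold vadd, vscale, vsub; ring. }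
        pose proof (Hmin _ HDs).
        pose proof (hL s x Hs Hx). pose proof (norm_nonneg _ (vsub (gf s) (gf x))).
        assert (HL0 : 0 <= L) by nra.
        pose proof (norm_sq _ (vsub s x)) as Hsq. pose proof (Hnorm_le s x Hs Hx).
        assert (dot (vsub s x) (vsub s x) <= M ^ 2) by (simpl; nra).
        assert (L * dot (vsub s x) (vsub s x) <= L * M ^ 2) by nra.
        unfold c, h. nra. }
  assert (Hbound : forall B, (forall s, D s -> dot (vopp (gf x)) (vsub s x) <= B) -> G <= B).
  { intros B HB. apply (proj2 HG). intros r [s [Hs Hr]]. subst r. auto. }
  assert (Hfin : forall s, D s ->
     (h > c -> dot (vopp (gf x)) (vsub s x) <= h + c) /\
     (~ h > c -> dot (vopp (gf x)) (vsub s x) <= M * sqrt (2 * h * L))).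
  { intros s Hs. apply final_alg; auto; unfold c; lra. }
  split.
  - intros Hhc. apply Hbound. intros s Hs. apply (proj1 (Hfin s Hs) Hhc).
  - intros Hhc. apply Hbound. intros s Hs. apply (proj2 (Hfin s Hs) Hhc).
Qed.
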